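(* Let $p$ be an odd prime and $q\in\mathbb C_p$ with $|1-q|_p<p^{-1/(p-1)}$. For $k,n\in\mathbb Z_+$ with $k\le n$, $$\int_{\mathbb Z_p}B_{k,n}(x,q)\,d\mu_{-1}(x)=\sum_{j=k}^n\sum_{m=0}^\infty\binom jk\binom nj\binom{j-k+m-1}{m}(-1)^{j-k+m}q^{j-k}(q-1)^mE_{m+j,q}.$$
   Context: For $x\in\mathbb Z_p$, $[x]_q=\frac{1-q^x}{1-q}$. The modified $q$-Bernstein polynomials are $B_{k,n}(x,q)=\binom nk[x]_q^k[1-x]_q^{n-k}$ for $0\le k\le n$. The fermionic $p$-adic integral is $\int_{\mathbb Z_p}f(x)\,d\mu_{-1}(x)=\lim_{N\to\infty}\sum_{x=0}^{p^N-1}f(x)(-1)^x$, and $E_{n,q}=\int_{\mathbb Z_p}[x]_q^n\,d\mu_{-1}(x)$ are the $q$-Euler numbers. Binomial coefficients $\binom{a}{m}$ are the generalized ones (so $\binom{-1}{0}=1$, $\binom{m-1}{m}=0$ for $m\ge1$). *)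

(* Defs.v *)
From mathcomp Require Import all_boot all_order all_algebra.
From mathcomp Require Import all_classical all_reals.
From mathcomp Require Import exp.
Set Implicit Arguments. Unset Strict Implicit. Unset Printing Implicit Defensive.
Import Order.TTheory GRing.Theory Num.Theory.
Local Open Scope ring_scope.

(* A complete non-archimedean valued field (K, av) whose absolute value
   restricts on Q to the p-adic absolute value |.|_p (normalised |p|_p = 1/p).
   C_p is such a field; C_p itself is not available in the libraries. *)
Definition padic_valued_field (R : realType) (p : nat) (K : fieldType)
    (av : K -> R) : Prop :=
  (forall x : K, (av x = 0) <-> (x = 0)) /\
      (forall x y : K, av (x * y) = av x * av y) /\
      (forall x y : K, av (x + y) <= Num.max (av x) (av y)) /\
      av (p%:R) = (p%:R)^-1 /\
      (forall n : nat, coprime n p -> av (n%:R) = 1) /\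
      forall u : nat -> K,
        (forall e : R, 0 < e -> exists N, forall m n, (N <= m)%N -> (N <= n)%N ->
            av (u m - u n) < e) ->
        exists l : K, forall e : R, 0 < e -> exists N, forall n, (N <= n)%N ->
            av (u n - l) < e.

Definition cvg_av (R : realType) (K : fieldType) (av : K -> R)
    (u : nat -> K) (l : K) : Prop :=
  forall e : R, 0 < e -> exists N, forall n, (N <= n)%N -> av (u n - l) < e.

Definition qnum (K : fieldType) (q : K) (z : int) : K :=
  if q == 1 then z%:~R else (1 - q ^ z) / (1 - q).

Definition qBernstein (K : fieldType) (k n : nat) (x : nat) (q : K) : K :=
  ('C(n, k))%:R * qnum q x%:Z ^+ k * qnum q (1 - x%:Z) ^+ (n - k).

Definition ferm_sum (K : fieldType) (p : nat) (f : nat -> K) (N : nat) : K :=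
  \sum_(0 <= x < p ^ N) f x * (-1) ^+ x.

(* the fermionic p-adic integral, as the limit of ferm_sum (0 if no limit) *)
Definition ferm_int (R : realType) (K : fieldType) (av : K -> R) (p : nat)
    (f : nat -> K) : K :=
  match boolp.pselect (exists l, cvg_av av (ferm_sum p f) l) with
  | left H => proj1_sig (boolp.cid H)
  | right _ => 0
  end.

Definition qEuler (R : realType) (K : fieldType) (av : K -> R) (p : nat)
    (q : K) (n : nat) : K :=
  ferm_int av p (fun x => qnum q x%:Z ^+ n).

Definition gbinom (a : int) (m : nat) : int :=
  match a with
  | Posz n => ('C(n, m))%:Z
  | Negz n => (-1) ^+ m * ('C(n + m, m))%:Z   (* a = -(n+1) *)
  end.

Definition psum (K : fieldType) (u : nat -> K) (M : nat) : K :=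
  \sum_(0 <= m < M) u m.

(* Main.v *)
Require Import Defs.
From mathcomp Require Import all_boot all_order all_algebra.
From mathcomp Require Import all_classical all_reals.
From mathcomp Require Import exp.
From mathcomp Require Import ring lra zify.
Import Order.TTheory GRing.Theory Num.Theory.
Local Open Scope ring_scope.

Section Basic.
Variables (R : realType) (p : nat) (K : fieldType) (av : K -> R).
Hypothesis H : padic_valued_field p av.
Hypothesis pp : prime p.

Lemma av_eq0 x : av x = 0 -> x = 0.
Proof. by case: H => h _; apply: (proj1 (h x)). Qed.
Lemma av0 : av 0 = 0.
Proof. by case: H => h _; apply: (proj2 (h 0)). Qed.
Lemma avM x y : av (x*y) = av x * av y.
Proof. by case: H => _ [h _]. Qed.
Lemma avD x y : av (x+y) <= Num.max (av x) (av y).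
Proof. by case: H => _ [_ [h _]]. Qed.
Lemma avp : av p%:R = (p%:R)^-1.
Proof. by case: H => _ [_ [_ [h _]]]. Qed.
Lemma avcop n : coprime n p -> av n%:R = 1.
Proof. by case: H => _ [_ [_ [_ [h _]]]]; apply: h. Qed.
Lemma av1 : av 1 = 1.
Proof. by have := avcop 1 (coprime1n p). Qed.

Lemma p_gt1 : (1 < p)%N. Proof. exact: prime_gt1. Qed.

Lemma avN1 : av (-1) = 1.
Proof.
have h2 : av (-1) ^+ 2 = 1 by rewrite expr2 -avM mulrNN mulr1 av1.
have /orP[/eqP//|/eqP hm] : (av (-1) == 1) || (av (-1) == -1) by rewrite -sqrf_eq1 h2.
exfalso.
have e1 : (1 : K) = p%:R + (-1) * (p.-1)%:R.
  by rewrite -[in p%:R](prednK (prime_gt0 pp)) -natr1; ring.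
have := avD (p%:R) ((-1) * (p.-1)%:R).
rewrite -e1 av1 avM hm avp.
rewrite avcop; last by rewrite -{2}(prednK (prime_gt0 pp)) coprimenS.
have hp : (p%:R : R)^-1 < 1.
  rewrite invf_lt1 ?ltr0n ?prime_gt0 // ltr1n; exact: p_gt1.
rewrite le_max => /orP[h|h]; lra.
Qed.

Lemma avN x : av (- x) = av x.
Proof. by rewrite -mulN1r avM avN1 mul1r. Qed.
Lemma avB x y : av (x - y) = av (y - x).
Proof. by rewrite -opprB avN. Qed.
Lemma av_ge0 x : 0 <= av x.
Proof. by have := avD x (-x); rewrite subrr av0 avN maxxx. Qed.

Lemma avD_le x y b : av x <= b -> av y <= b -> av (x + y) <= b.
Proof. move=> hx hy; apply: le_trans (avD x y) _; by rewrite ge_max hx hy. Qed.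
Lemma avD_lt x y b : av x < b -> av y < b -> av (x + y) < b.
Proof. move=> hx hy; apply: le_lt_trans (avD x y) _; by rewrite gt_max hx hy. Qed.

Lemma av_sum_le (I : Type) (r : seq I) (P : pred I) (F : I -> K) b :
  0 <= b -> (forall i, P i -> av (F i) <= b) -> av (\sum_(i <- r | P i) F i) <= b.
Proof.
move=> b0 hF; apply: (big_ind (fun y => av y <= b)); first by rewrite av0.
  move=> x y; exact: avD_le.
exact: hF.
Qed.
Lemma av_sum_lt (I : Type) (r : seq I) (P : pred I) (F : I -> K) b :
  0 < b -> (forall i, P i -> av (F i) < b) -> av (\sum_(i <- r | P i) F i) < b.
Proof.
move=> b0 hF; apply: (big_ind (fun y => av y < b)); first by rewrite av0.
  move=> x y; exact: avD_lt.
exact: hF.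
Qed.

Lemma av_natle n : av n%:R <= 1.
Proof. elim: n => [|n IH]; first by rewrite av0. by rewrite -natr1 avD_le // av1. Qed.
Lemma av_intle (z : int) : av z%:~R <= 1.
Proof. case: z => n; first exact: av_natle. by rewrite NegzE mulrNz avN av_natle. Qed.
Lemma avX x n : av (x ^+ n) = av x ^+ n.
Proof. elim: n => [|n IH]; first by rewrite !expr0 av1. by rewrite !exprS avM IH. Qed.
Lemma avV x : av (x^-1) = (av x)^-1.
Proof.
have [->|x0] := eqVneq x 0; first by rewrite invr0 av0 invr0.
have : av x * av x^-1 = 1 by rewrite -avM mulfV // av1.
have ax0 : av x != 0 by apply/eqP => /av_eq0 /eqP; rewrite (negbTE x0).
move=> h; apply: (mulfI ax0); by rewrite h mulfV.
Qed.


Lemma cvg_unique u l1 l2 : cvg_av av u l1 -> cvg_av av u l2 -> l1 = l2.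
Proof.
move=> h1 h2; apply/eqP; rewrite -subr_eq0; apply/eqP/av_eq0.
apply/eqP; rewrite eq_le av_ge0 andbT leNgt; apply/negP => he.
have [N1 hN1] := h1 _ he; have [N2 hN2] := h2 _ he.
have : av ((u (N1 + N2)%N - l2) + - (u (N1 + N2)%N - l1)) < av (l1 - l2).
  apply: avD_lt; first by apply: hN2; rewrite leq_addl.
  by rewrite avN; apply: hN1; rewrite leq_addr.
by rewrite (_ : _ + _ = l1 - l2) ?ltxx //; ring.
Qed.

Lemma cvg_add u v w l1 l2 : cvg_av av u l1 -> cvg_av av v l2 ->
  (forall N, w N = u N + v N) -> cvg_av av w (l1 + l2).
Proof.
move=> h1 h2 hw e e0; have [N1 hN1] := h1 _ e0; have [N2 hN2] := h2 _ e0.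
exists (N1 + N2)%N => n hn; rewrite hw.
rewrite (_ : _ - _ = (u n - l1) + (v n - l2)); last by ring.
apply: avD_lt; [apply: hN1|apply: hN2]; apply: leq_trans hn; by rewrite ?leq_addr ?leq_addl.
Qed.

Lemma cvg_sub u v w l1 l2 : cvg_av av u l1 -> cvg_av av v l2 ->
  (forall N, w N = u N - v N) -> cvg_av av w (l1 - l2).
Proof.
move=> h1 h2 hw e e0; have [N1 hN1] := h1 _ e0; have [N2 hN2] := h2 _ e0.
exists (N1 + N2)%N => n hn; rewrite hw.
rewrite (_ : _ - _ = (u n - l1) + - (v n - l2)); last by ring.
apply: avD_lt; [apply: hN1|rewrite avN; apply: hN2]; apply: leq_trans hn; by rewrite ?leq_addr ?leq_addl.
Qed.

Lemma cvg_scale u w c l : av c <= 1 -> cvg_av av u l ->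
  (forall N, w N = c * u N) -> cvg_av av w (c * l).
Proof.
move=> hc h1 hw e e0; have [N1 hN1] := h1 _ e0.
exists N1 => n hn; rewrite hw -mulrBr avM.
apply: le_lt_trans (hN1 _ hn); rewrite ler_piMl //; exact: av_ge0.
Qed.

Lemma cvg_sum (r : seq nat) (U : nat -> nat -> K) (l : nat -> K) w :
  (forall i, i \in r -> cvg_av av (U i) (l i)) ->
  (forall N, w N = \sum_(i <- r) U i N) ->
  cvg_av av w (\sum_(i <- r) l i).
Proof.
elim: r w => [|i r IH] w hU hw.
  move=> e e0; exists 0%N => n _; by rewrite hw !big_nil subrr av0.
rewrite big_cons; apply: (@cvg_add (U i) (fun N => \sum_(j <- r) U j N)).
- by apply: hU; rewrite mem_head.
- apply: IH => // j hj; apply: hU; by rewrite in_cons hj orbT.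
- by move=> N; rewrite hw big_cons.
Qed.

Lemma ferm_sum_sub (f g : nat -> K) N :
  ferm_sum p (fun x => f x - g x) N = ferm_sum p f N - ferm_sum p g N.
Proof. rewrite /ferm_sum -sumrB; apply: eq_bigr => i _; by rewrite mulrBl. Qed.

Lemma ferm_sum_lin (r : seq nat) (c : nat -> K) (F : nat -> nat -> K) N :
  ferm_sum p (fun x => \sum_(i <- r) c i * F i x) N = \sum_(i <- r) c i * ferm_sum p (F i) N.
Proof.
rewrite /ferm_sum.
under eq_bigr do rewrite mulr_suml.
rewrite exchange_big /=; apply: eq_bigr => i _; rewrite mulr_sumr.
apply: eq_bigr => x _; by rewrite mulrA.
Qed.

Lemma ferm_sum_sum (r : seq nat) (F : nat -> nat -> K) N :
  ferm_sum p (fun x => \sum_(i <- r) F i x) N = \sum_(i <- r) ferm_sum p (F i) N.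
Proof.
rewrite /ferm_sum.
under eq_bigr do rewrite mulr_suml.
by rewrite exchange_big.
Qed.

Lemma av_sign n : av ((-1) ^+ n) = 1.
Proof. by rewrite avX avN1 expr1n. Qed.

Lemma ferm_bound (f : nat -> K) l b : (forall x, av (f x) <= b) -> cvg_av av (ferm_sum p f) l -> av l <= b.
Proof.
move=> hf hl.
have b0 : 0 <= b by apply: le_trans (hf 0%N); exact: av_ge0.
rewrite leNgt; apply/negP => hlb.
have e0 : 0 < av l by apply: le_lt_trans hlb.
have [N hN] := hl _ e0.
have hs : av (ferm_sum p f N) <= b.
  apply: av_sum_le => // x _; by rewrite avM av_sign mulr1.
have := avD (ferm_sum p f N) (- (ferm_sum p f N - l)).
rewrite (_ : _ + _ = l); last by ring.
rewrite avN le_max => /orP[h|h].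
  by have := le_trans h hs; rewrite leNgt hlb.
by have := lt_le_trans (hN _ (leqnn N)) h; rewrite ltxx.
Qed.

Lemma ferm_int_eq (f : nat -> K) l : cvg_av av (ferm_sum p f) l -> ferm_int av p f = l.
Proof.
move=> hl; rewrite /ferm_int; case: boolp.pselect => [h'|h']; last first.
  by exfalso; apply: h'; exists l.
case: (boolp.cid h') => /= l' hl'; exact: cvg_unique hl' hl.
Qed.


Hypothesis po : odd p.

Definition UC (f : nat -> K) := (forall x, av (f x) <= 1) /\
  forall e, 0 < e -> exists N, forall x y, av (f (x + p ^ N * y)%N - f x) < e.

Lemma sum_split (F : nat -> K) P c :
  \sum_(0 <= x < P * c) F x = \sum_(0 <= i < c) \sum_(0 <= y < P) F (P * i + y)%N.
Proof.
elim: c => [|c IH]; first by rewrite muln0 !big_geq.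
rewrite mulnS addnC (big_cat_nat (leq0n (P * c)) (leq_addr P (P * c))) /= IH.
rewrite (big_nat_recr c) //=; congr (_ + _).
rewrite -{1}(add0n (P * c)%N) big_addn addKn.
by apply: eq_bigr => y _; rewrite addnC.
Qed.

Lemma sum_sign n : \sum_(0 <= i < n) (-1) ^+ i = (odd n)%:R :> K.
Proof.
elim: n => [|n IH]; first by rewrite big_geq.
rewrite big_nat_recr //= IH -signr_odd; by case: (odd n); rewrite /= ?expr1 ?expr0; ring.
Qed.

Lemma ferm_step (f : nat -> K) e N0 : 0 < e ->
  (forall x y, av (f (x + p ^ N0 * y)%N - f x) < e) ->
  forall N, (N0 <= N)%N -> av (ferm_sum p f N.+1 - ferm_sum p f N) < e.
Proof.
move=> e0 hf N hN.
set P := (p ^ N)%N.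
have oP : odd P by rewrite /P oddX po orbT.
have e1 : ferm_sum p f N.+1 =
   \sum_(0 <= i < p) (-1) ^+ i * \sum_(0 <= y < P) f (P * i + y)%N * (-1) ^+ y.
  rewrite /ferm_sum expnSr sum_split; apply: eq_bigr => i _.
  rewrite mulr_sumr; apply: eq_bigr => y _.
  rewrite exprD exprM -signr_odd oP expr1; ring.
have e2 : ferm_sum p f N = \sum_(0 <= i < p) (-1) ^+ i * ferm_sum p f N.
  by rewrite -mulr_suml sum_sign po mul1r.
rewrite e1 {1}e2 -sumrB.
apply: av_sum_lt => // i _.
rewrite -mulrBr avM av_sign mul1r /ferm_sum -sumrB.
apply: av_sum_lt => // y _.
rewrite -mulrBl avM av_sign mulr1.
rewrite addnC /P -(subnKC hN) expnD -mulnA; exact: hf.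
Qed.

Lemma UC_exists (f : nat -> K) : UC f -> exists l, cvg_av av (ferm_sum p f) l.
Proof.
case=> _ hf; case: H => _ [_ [_ [_ [_ hc]]]]; apply: hc => e e0.
have [N0 hN0] := hf _ e0; exists N0.
have hd : forall N, (N0 <= N)%N -> forall d, av (ferm_sum p f (N + d) - ferm_sum p f N) < e.
  move=> N hN; elim=> [|d IH]; first by rewrite addn0 subrr av0.
  rewrite (_ : _ - _ = (ferm_sum p f (N + d).+1 - ferm_sum p f (N + d)) +
                      (ferm_sum p f (N + d) - ferm_sum p f N)); last by rewrite addnS; ring.
  apply: avD_lt => //; apply: (@ferm_step f e N0 e0 hN0); apply: leq_trans hN _; exact: leq_addr.
move=> m n hm hn; case: (leqP m n) => hmn.
  by rewrite avB -(subnKC hmn); apply: hd.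
by rewrite -(subnKC (ltnW hmn)); apply: hd.
Qed.

Lemma UC_mul [f g h : nat -> K] : UC f -> UC g -> (forall x, h x = f x * g x) -> UC h.
Proof.
move=> [bf cf] [bg cg] hh; split.
  move=> x; rewrite hh avM; rewrite mulr_ile1 ?av_ge0 //.
move=> e e0; have [N1 h1] := cf _ e0; have [N2 h2] := cg _ e0.
exists (N1 + N2)%N => x y; rewrite !hh.
rewrite (_ : _ - _ = f (x + p ^ (N1 + N2) * y)%N * (g (x + p ^ (N1 + N2) * y)%N - g x)
                   + (f (x + p ^ (N1 + N2) * y)%N - f x) * g x); last by ring.
apply: avD_lt; rewrite avM.
  apply: le_lt_trans (_ : av (g (x + p ^ (N1 + N2) * y)%N - g x) < e).
    by rewrite ler_piMl ?av_ge0.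
  by rewrite expnD (mulnC (p ^ N1)%N) -mulnA; apply: h2.
apply: le_lt_trans (_ : av (f (x + p ^ (N1 + N2) * y)%N - f x) < e).
  by rewrite ler_piMr ?av_ge0.
by rewrite expnD -mulnA; apply: h1.
Qed.

Lemma UC_const (c : K) : av c <= 1 -> UC (fun _ => c).
Proof. move=> hc; split=> // e e0; exists 0%N => x y; by rewrite subrr av0. Qed.

Lemma UC_exp (f : nat -> K) r : UC f -> UC (fun x => f x ^+ r).
Proof.
move=> hf; elim: r => [|r IH].
  have h1 : av (1 : K) <= 1 by rewrite av1.
  by apply: (UC_mul (@UC_const 1 h1) (@UC_const 1 h1)) => x; rewrite expr0 mulr1.
apply: (UC_mul hf IH) => x; by rewrite exprS.
Qed.


Lemma bern (h : R) N : 0 <= h -> 1 + N%:R * h <= (1 + h) ^+ N.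
Proof.
move=> h0; elim: N => [|N IH]; first by rewrite mul0r addr0 expr0.
rewrite exprSr -natr1.
have hN : 0 <= N%:R :> R by rewrite ler0n.
have X0 : 0 <= (1 + h) ^+ N by rewrite exprn_ge0 // addr_ge0.
have h1 : (1 + N%:R * h) * (1 + h) <= (1 + h) ^+ N * (1 + h).
  by rewrite ler_wpM2r // addr_ge0.
have h2 : 0 <= N%:R * h * h by rewrite !mulr_ge0.
nra.
Qed.

Lemma geom (c : R) e : 0 <= c -> c < 1 -> 0 < e -> exists N, c ^+ N < e.
Proof.
move=> c0 c1 e0.
have [->|cn0] := eqVneq c 0; first by exists 1%N; rewrite expr1.
have cp : 0 < c by rewrite lt_def cn0 c0.
set h := c^-1 - 1.
have hp : 0 < h by rewrite /h subr_gt0 invf_gt1.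
have a0 : 0 <= e^-1 / h by rewrite divr_ge0 // ?invr_ge0 ltW.
set N := Num.Def.archi_bound (e^-1 / h).
have hN : e^-1 / h < N%:R := archi_boundP a0.
exists N.
have key : c ^+ N * (1 + h) ^+ N = 1.
  by rewrite -exprMn /h addrC subrK mulfV ?expr1n.
have hb := @bern h N (ltW hp).

have hNh : e^-1 < N%:R * h by rewrite -ltr_pdivrMr.
have eX : 1 < e * (1 + h) ^+ N.
  have : e * e^-1 = 1 by rewrite mulfV // gt_eqF.
  have hX : e^-1 < (1 + h) ^+ N by apply: lt_le_trans hb; lra.
  have : e * e^-1 < e * (1 + h) ^+ N by rewrite ltr_pM2l.
  lra.
have Y0 : 0 <= c ^+ N by rewrite exprn_ge0.
have X0 : 0 < (1 + h) ^+ N by rewrite exprn_gt0 // addr_gt0.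
nra.
Qed.

Arguments geom [c e].

Variable q : K.
Hypothesis hq : av (1 - q) < 1.

Definition tq (r : K) x := \sum_(0 <= i < x) r ^+ i.

Lemma avq : av q = 1.
Proof.
apply/eqP; rewrite eq_le; apply/andP; split.
  rewrite (_ : q = 1 + - (1 - q)); last by ring.
  by apply: avD_le; rewrite ?av1 // avN ltW.
have := avD q (1 - q); rewrite (_ : q + (1 - q) = 1); last by ring.
rewrite av1 le_max => /orP[//|h]; by have := lt_le_trans hq h; rewrite ltxx.
Qed.

Lemma q0 : q != 0.
Proof. apply/eqP => h; have := avq; rewrite h av0 => /eqP; by rewrite eq_sym oner_eq0. Qed.

Lemma tq0 r : tq r 0 = 0. Proof. by rewrite /tq big_geq. Qed.
Lemma tqS r x : tq r x.+1 = tq r x + r ^+ x. Proof. by rewrite /tq big_nat_recr. Qed.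

Lemma tqD r a b : tq r (a + b) = tq r a + r ^+ a * tq r b.
Proof.
elim: b => [|b IH]; first by rewrite addn0 tq0 mulr0 addr0.
by rewrite addnS !tqS IH exprD; ring.
Qed.

Lemma tqM r a b : tq r (a * b) = tq r a * tq (r ^+ a) b.
Proof.
elim: b => [|b IH]; first by rewrite muln0 !tq0 mulr0.
by rewrite mulnSr tqD IH tqS exprM; ring.
Qed.

Lemma tqX r x : r ^+ x = 1 + (r - 1) * tq r x.
Proof.
elim: x => [|x IH]; first by rewrite expr0 tq0 mulr0 addr0.
by rewrite tqS exprSr IH; ring.
Qed.

Lemma tqX' r x : (r - 1) * tq r x = r ^+ x - 1.
Proof. by rewrite (tqX r x); ring. Qed.

Lemma tq_le r x : av r <= 1 -> av (tq r x) <= 1.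
Proof.
move=> hr; apply: av_sum_le => // i _; by rewrite avX exprn_ile1 ?av_ge0.
Qed.

Definition dl := av (1 - q).
Definition cc := Num.max (p%:R^-1) dl.

Lemma cc_ge0 : 0 <= cc.
Proof. rewrite le_max; apply/orP; right; exact: av_ge0. Qed.
Lemma cc_lt1 : cc < 1.
Proof.
rewrite gt_max hq andbT invf_lt1 ?ltr0n ?prime_gt0 // ltr1n; exact: p_gt1.
Qed.
Lemma dl_le : dl <= cc. Proof. by rewrite le_max lexx orbT. Qed.
Lemma pinv_le : (p%:R^-1 : R) <= cc. Proof. by rewrite le_max lexx. Qed.

Lemma tau N : av (tq q (p ^ N)) <= cc ^+ N.
Proof.
elim: N => [|N IH].
  by rewrite expn0 expr0 tqS tq0 add0r expr0 av1.
rewrite expnSr tqM avM exprSr.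
apply: ler_pM => //; try exact: av_ge0.
set Q := q ^+ (p ^ N).
have avQ : av Q = 1 by rewrite avX avq expr1n.
have -> : tq Q p = p%:R + \sum_(0 <= i < p) (Q ^+ i - 1).
  rewrite /tq (eq_bigr (fun i => (Q ^+ i - 1) + 1)); last by move=> i _; rewrite subrK.
  by rewrite big_split sumr_const_nat subn0 addrC.
apply: avD_le; first by rewrite avp pinv_le.
apply: av_sum_le; first exact: cc_ge0.
move=> i _; rewrite -tqX' avM.
rewrite /Q -tqX' avM avB -/dl.
apply: le_trans dl_le.
rewrite -[X in _ <= X]mulr1 -[X in _ <= X]mulr1.
apply: ler_pM; rewrite ?mulr_ge0 ?av_ge0 //; first apply: ler_pM; rewrite ?av_ge0 //.
- by apply: tq_le; rewrite avq.
- by apply: tq_le; rewrite -/Q avQ.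
Qed.


Lemma tq_bound N y : av (tq q (p ^ N * y)) <= cc ^+ N.
Proof.
rewrite tqM avM -[X in _ <= X]mulr1; apply: ler_pM; rewrite ?av_ge0 ?tau //.
by apply: tq_le; rewrite avX avq expr1n.
Qed.

Lemma UC_t : UC (tq q).
Proof.
split; first by move=> x; apply: tq_le; rewrite avq.
move=> e e0; have [N hN] := geom cc_ge0 cc_lt1 e0; exists N => x y.
rewrite tqD addrC addKr avM avX avq expr1n mul1r.
exact: le_lt_trans (tq_bound N y) hN.
Qed.

Definition ww x := (q ^+ x)^-1.

Lemma avw x : av (ww x) = 1.
Proof. by rewrite /ww avV avX avq expr1n invr1. Qed.

Lemma UC_w : UC ww.
Proof.
split; first by move=> x; rewrite avw.
move=> e e0; have [N hN] := geom cc_ge0 cc_lt1 e0; exists N => x y.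
have qn0 : forall m, q ^+ m != 0 by move=> m; rewrite expf_neq0 // q0.
have -> : ww (x + p ^ N * y)%N - ww x =
   - (ww x * ww (p ^ N * y)%N * ((q - 1) * tq q (p ^ N * y))).
  rewrite tqX' /ww exprD invfM.
  have := qn0 x; have := qn0 (p ^ N * y)%N.
  move: (q ^+ x) (q ^+ (p ^ N * y)%N) => A B hB hA; field.
  by rewrite hA hB.
rewrite avN !avM !avw !mul1r avB -/dl.
apply: le_lt_trans hN; apply: le_trans (tq_bound N y).
rewrite ler_piMl ?av_ge0 //; apply: le_trans dl_le (ltW cc_lt1).
Qed.


Lemma qnum_nat x : qnum q x%:Z = tq q x.
Proof.
rewrite /qnum; case: eqP => [e|ne].
  rewrite e /tq; under eq_bigr do rewrite expr1n.
  by rewrite sumr_const_nat subn0 -pmulrn.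
have h1 : 1 - q != 0 by rewrite subr_eq0 eq_sym; apply/eqP.
rewrite -exprnP (tqX q x); field; exact: h1.
Qed.

Lemma qnum_1m x : qnum q (1 - x%:Z) = 1 - q * ww x * tq q x.
Proof.
rewrite /qnum; case: eqP => [e|ne].
  rewrite /ww e expr1n invr1 mul1r mul1r /tq; under eq_bigr do rewrite expr1n.
  by rewrite sumr_const_nat subn0 intrB -pmulrn.
have h1 : 1 - q != 0 by rewrite subr_eq0 eq_sym; apply/eqP.
rewrite expfzDr ?q0 // expr1z -exprnN /ww.
move: (tqX q x) (expf_neq0 x q0); move: (q ^+ x) (tq q x) => A T -> hA.
field; by rewrite h1 hA.
Qed.

Definition ss a M (u : K) := \sum_(0 <= m < M) ('C((a + m).-1, m))%:R * u ^+ m.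

Lemma ss_rec a M u : (1 - u) * ss a.+1 M.+1 u =
  ss a M.+1 u - ('C((a.+1 + M).-1, M))%:R * u ^+ M.+1.
Proof.
elim: M => [|M IH].
  by rewrite /ss !big_nat1 !addn0 !bin0 expr0 expr1; ring.
have P : ('C((a.+1 + M.+1).-1, M.+1))%:R =
   ('C((a.+1 + M).-1, M))%:R + ('C((a + M.+1).-1, M.+1))%:R :> K.
  by rewrite -natrD !addSn !addnS /= binS addnC.
rewrite /ss big_nat_recr //= [in RHS]big_nat_recr //=.
rewrite -/(ss a.+1 M.+1 u) -/(ss a M.+1 u) mulrDr IH P.
rewrite !exprS; ring.
Qed.

Lemma ss0 M u : ss 0 M.+1 u = 1.
Proof.
elim: M => [|M IH]; first by rewrite /ss big_nat1 bin0 expr0 mulr1.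
rewrite /ss big_nat_recr //= -/(ss 0 M.+1 u) IH bin_small //.
by rewrite mul0r addr0.
Qed.

Lemma ss_bound a M u : av (1 - u) = 1 ->
  av (ss a M.+1 u - ((1 - u)^-1) ^+ a) <= av u ^+ M.+1.
Proof.
move=> hu; have hu0 : 1 - u != 0.
  by apply/eqP => h; move: hu; rewrite h av0 => /eqP; rewrite eq_sym oner_eq0.
have aW : av ((1 - u)^-1) = 1 by rewrite avV hu invr1.
elim: a => [|a IH].
  by rewrite ss0 expr0 subrr av0 exprn_ge0 // av_ge0.
have E : ss a.+1 M.+1 u =
    (1 - u)^-1 * (ss a M.+1 u - ('C((a.+1 + M).-1, M))%:R * u ^+ M.+1).
  by rewrite -ss_rec mulKf.
rewrite E [(1 - u)^-1 ^+ a.+1]exprS.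
rewrite (_ : _ - _ = (1 - u)^-1 * (ss a M.+1 u - (1 - u)^-1 ^+ a) +
     - ((1 - u)^-1 * (('C((a.+1 + M).-1, M))%:R * u ^+ M.+1))); last by ring.
apply: avD_le; first by rewrite avM aW mul1r.
rewrite avN !avM aW mul1r avX ler_piMl ?exprn_ge0 ?av_ge0 //; exact: av_natle.
Qed.


Lemma bin_trin n j k : (k <= j)%N -> (j <= n)%N ->
  ('C(j,k) * 'C(n,j) = 'C(n,k) * 'C(n-k, j-k))%N.
Proof.
move=> hkj hjn.
apply/eqP; rewrite -(eqn_pmul2r (_ : 0 < k`! * (j-k)`! * (n-j)`!)%N) ?muln_gt0 ?fact_gt0 //; apply/eqP.
have e1 := bin_fact hkj.
have e2 := bin_fact hjn.
have e4 := bin_fact (leq_trans hkj hjn).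
have e3 := bin_fact (leq_sub2r k hjn).
have hh : (n - k - (j - k) = n - j)%N by lia.
rewrite hh in e3.
transitivity (n`!).
  rewrite -e2 -e1; ring.
rewrite -e4 -e3; ring.
Qed.

Lemma gb N m : gbinom ((N + m)%:Z - 1) m = ('C((N + m).-1, m))%:Z.
Proof.
case: m => [|m].
  rewrite addn0 bin0; case: (N%:Z - 1) => n; by rewrite /gbinom ?bin0 ?addn0 ?expr0 ?mul1r.
by rewrite addnS -[(N + m).+1]addn1 PoszD addrK addn1.
Qed.

Lemma av_mul_le1 x y : av x <= 1 -> av y <= 1 -> av (x * y) <= 1.
Proof. by move=> hx hy; rewrite avM mulr_ile1 ?av_ge0. Qed.

Definition hh k n j x := (('C(j,k))%:R * ('C(n,j))%:R * (-1) ^+ (j - k) * q ^+ (j - k))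
   * (tq q x ^+ j * ww x ^+ (j - k)).

Lemma pointB k n x : (k <= n)%N -> qBernstein k n x q = \sum_(k <= j < n.+1) hh k n j x.
Proof.
move=> hkn.
rewrite /qBernstein qnum_nat qnum_1m.
rewrite (_ : \sum_(k <= j < n.+1) hh k n j x = \sum_(0 <= i < n.+1 - k) hh k n (i + k) x);
  last by rewrite -{1}(add0n k) big_addn.
rewrite subSn //.
set X := - (q * ww x * tq q x).
have -> : 1 - q * ww x * tq q x = X + 1 by rewrite /X; ring.
rewrite exprD1n -(big_mkord xpredT (fun i => X ^+ i *+ 'C(n - k, i))) mulr_sumr.
apply: eq_big_nat => i /andP[_ hi].
rewrite /hh addnK.
have hik : (i + k <= n)%N by lia.
have hb := @bin_trin n (i + k) k (leq_addl i k) hik.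
have eX : X ^+ i = (-1) ^+ i * (q ^+ i * ww x ^+ i * tq q x ^+ i).
  by rewrite /X -!exprMn; congr (_ ^+ _); ring.
rewrite -natrM hb addnK natrM mulr_natr exprD eX; ring.
Qed.

Lemma UC_h k n j : UC (hh k n j).
Proof.
apply: (UC_mul (@UC_const (('C(j,k))%:R * ('C(n,j))%:R * (-1) ^+ (j - k) * q ^+ (j - k)) _)
   (UC_mul (@UC_exp _ j UC_t) (@UC_exp _ (j - k) UC_w) (fun x => erefl))) => //.
rewrite !av_mul_le1 ?av_natle //; first by rewrite av_sign.
by rewrite avX avq expr1n.
Qed.

Lemma approx (F : nat -> nat -> K) (g : nat -> K) (v : nat -> K) l :
  (forall M, cvg_av av (ferm_sum p (F M)) (v M)) ->
  cvg_av av (ferm_sum p g) l ->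
  (forall e, 0 < e -> exists M0, forall M, (M0 <= M)%N ->
      exists b, b < e /\ forall x, av (F M x - g x) <= b) ->
  cvg_av av v l.
Proof.
move=> hF hg hb e e0; have [M0 hM0] := hb e e0; exists M0 => M hM.
have [b [be hx]] := hM0 M hM.
have hc : cvg_av av (ferm_sum p (fun x => F M x - g x)) (v M - l).
  apply: (@cvg_sub _ _ _ _ _ (hF M) hg) => N; exact: ferm_sum_sub.
exact: le_lt_trans (@ferm_bound _ _ _ hx hc) be.
Qed.

Lemma E_cvg r : cvg_av av (ferm_sum p (fun x => qnum q x%:Z ^+ r)) (qEuler av p q r).
Proof.
have e : (fun x => qnum q x%:Z ^+ r) = (fun x => tq q x ^+ r).
  by apply: boolp.funext => x; rewrite qnum_nat.
rewrite /qEuler e; have [l hl] := @UC_exists _ (@UC_exp _ r UC_t).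
by rewrite (@ferm_int_eq _ _ hl).
Qed.


Lemma main_sec k n : (k <= n)%N ->
  (exists I, cvg_av av (ferm_sum p (fun x => qBernstein k n x q)) I) /\
  (forall r : nat, exists E, cvg_av av (ferm_sum p (fun x => qnum q x%:Z ^+ r)) E) /\
  exists S : nat -> K,
    (forall j, (k <= j <= n)%N ->
      cvg_av av
        (psum (fun m => ('C(j, k))%:R * ('C(n, j))%:R
                        * (gbinom ((j - k + m)%:Z - 1) m)%:~R
                        * (-1) ^+ (j - k + m) * q ^+ (j - k) * (q - 1) ^+ m
                        * qEuler av p q (m + j)))
        (S j)) /\
    ferm_int av p (fun x => qBernstein k n x q) = \sum_(k <= j < n.+1) S j.
Proof.
move=> hkn.
pose S := fun j => ferm_int av p (hh k n j).
have hS : forall j, cvg_av av (ferm_sum p (hh k n j)) (S j).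
  move=> j; have [l hl] := @UC_exists _ (UC_h k n j); by rewrite /S (@ferm_int_eq _ _ hl).
have hB : cvg_av av (ferm_sum p (fun x => qBernstein k n x q)) (\sum_(k <= j < n.+1) S j).
  apply: (@cvg_sum _ (fun j => ferm_sum p (hh k n j))) => [j _|N]; first exact: hS.
  rewrite -ferm_sum_sum /ferm_sum; apply: eq_bigr => x _; by rewrite pointB.
split; first by exists (\sum_(k <= j < n.+1) S j).
split; first by move=> r; exists (qEuler av p q r); exact: E_cvg.
exists S; split; last exact: (@ferm_int_eq _ _ hB).
move=> j /andP[hkj hjn].
pose cf := fun m => ('C(j, k))%:R * ('C(n, j))%:R
                        * (gbinom ((j - k + m)%:Z - 1) m)%:~R
                        * (-1) ^+ (j - k + m) * q ^+ (j - k) * (q - 1) ^+ m.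
pose F := fun M x => \sum_(0 <= m < M) cf m * qnum q x%:Z ^+ (m + j).
pose K0 := ('C(j,k))%:R * ('C(n,j))%:R * (-1) ^+ (j - k) * q ^+ (j - k).
have hcf : forall m, av (cf m) <= 1.
  move=> m; rewrite /cf !av_mul_le1 ?av_natle ?av_intle ?av_sign //.
    by rewrite avX avq expr1n.
  by rewrite avX avB exprn_ile1 ?av_ge0 // ltW.
have hK0 : av K0 <= 1.
  rewrite /K0 !av_mul_le1 ?av_natle ?av_sign //.
  by rewrite avX avq expr1n.
apply: (@approx F (hh k n j)).
- move=> M; rewrite /psum.
  apply: (@cvg_sum _ (fun m N => cf m * ferm_sum p (fun x => qnum q x%:Z ^+ (m + j)) N)).
    move=> m _; exact: (@cvg_scale _ _ _ _ (hcf m) (E_cvg (m + j))).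
  move=> N; rewrite /F; exact: ferm_sum_lin.
- exact: hS.
move=> e e0; have [N hN] := @geom dl e (av_ge0 _) hq e0.
exists N.+1 => M hM; exists (dl ^+ M); split.
  apply: le_lt_trans hN; rewrite ler_wiXn2l ?av_ge0 ?(ltnW hM) //; exact: ltW.
case: M hM => [//|M] hM x.
have e1q : 1 - q = -1 * (q - 1) by ring.
have eF : F M.+1 x = K0 * (tq q x ^+ j * ss (j - k) M.+1 ((1 - q) * tq q x)).
  rewrite /F /ss; set T := tq q x.
  rewrite [T ^+ j * _]mulr_sumr mulr_sumr; apply: eq_bigr => m _.
  rewrite qnum_nat -/T /cf gb -pmulrn !exprD exprMn e1q exprMn /K0; ring.
have ew : ww x = (1 - (1 - q) * tq q x)^-1 by rewrite /ww tqX; congr (_^-1); ring.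
have eu : av (1 - (1 - q) * tq q x) = 1.
  by rewrite (_ : 1 - (1 - q) * tq q x = q ^+ x) ?avX ?avq ?expr1n // tqX; ring.
have hu : av ((1 - q) * tq q x) <= dl.
  rewrite avM -/dl ler_piMr ?av_ge0 //; apply: tq_le; by rewrite avq.
rewrite eF /hh ew -/K0 -mulrBr -mulrBr avM (avM (tq q x ^+ j)).
have hs := @ss_bound (j - k) M _ eu.
have ht : av (tq q x ^+ j) <= 1 by rewrite avX exprn_ile1 ?av_ge0 // tq_le // avq.
have hs2 : av ((1 - q) * tq q x) ^+ M.+1 <= dl ^+ M.+1.
  by rewrite lerXn2r // nnegrE ?av_ge0.
apply: le_trans (ler_piMl _ hK0) _; first by rewrite mulr_ge0 ?av_ge0.
apply: le_trans (ler_piMl _ ht) _; first by rewrite av_ge0.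
exact: le_trans hs hs2.
Qed.

End Basic.


Theorem mainTheorem9 (R : realType) (p : nat) (K : fieldType) (av : K -> R)
    (q : K) (k n : nat) :
  prime p -> odd p -> padic_valued_field p av ->
  av (1 - q) < (p%:R : R) `^ (- (p.-1%:R)^-1) ->
  (k <= n)%N ->
  (* the integrals involved exist *)
  (exists I, cvg_av av (ferm_sum p (fun x => qBernstein k n x q)) I) /\
  (forall r : nat, exists E, cvg_av av (ferm_sum p (fun x => qnum q x%:Z ^+ r)) E) /\
  (* each inner series over m converges, and the identity holds *)
  exists S : nat -> K,
    (forall j, (k <= j <= n)%N ->
      cvg_av av
        (psum (fun m => ('C(j, k))%:R * ('C(n, j))%:R
                        * (gbinom ((j - k + m)%:Z - 1) m)%:~R
                        * (-1) ^+ (j - k + m) * q ^+ (j - k) * (q - 1) ^+ m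
                        * qEuler av p q (m + j)))
        (S j)) /\
    ferm_int av p (fun x => qBernstein k n x q) = \sum_(k <= j < n.+1) S j.
Proof.
move=> pp po H hq hkn.
have hq1 : av (1 - q) < 1.
  apply: lt_le_trans hq _.
  have p1 : (1 : R) <= p%:R by rewrite ler1n prime_gt0.
  have s0 : (0 : R) <= (p.-1%:R)^-1 by rewrite invr_ge0 ler0n.
  have h1 : (1 : R) <= (p%:R : R) `^ ((p.-1%:R)^-1).
    by apply: le_trans (ler_powR p1 s0); rewrite powRr0.
  rewrite powRN invf_le1 //; apply: lt_le_trans h1; exact: ltr01.
exact: (@main_sec R p K av H pp po q hq1 k n hkn).
Qed.
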